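(* Let $b\ge 1$ and $L\ge 1$ be integers. Let $A$ be the set of permutations $s\in\mathcal{S}_L$ all of whose cycles have length at most $b$, and let $B$ be the set of permutations $t\in\mathcal{S}_L$ such that there do not exist integers $i,j$ with $j\ge 0$, $j+b<i\le L$ and $t(j+k)>t(i)$ for all $k\in\{1,\ldots,b\}$. Then the map $s\mapsto \widetilde{F(s)}$ is a bijection from $A$ onto $B$. In particular $|A|=|B|$.
   Context: $\mathcal{S}_L$ denotes the set of permutations of $\{1,\ldots,L\}$; a permutation $s$ is identified with the word $s(1)s(2)\cdots s(L)$. Cycles include fixed points. The Foata correspondence $F:\mathcal{S}_L\to\mathcal{S}_L$ is defined as follows. Take the cycle decomposition of $s$ (including fixed points). Write each cycle starting with its largest element (the cycle head), i.e. the cycle with largest element $c_1$ is written $[c_1\,s(c_1)\,s^2(c_1)\cdots s^{d-1}(c_1)]$ where $d$ is its length. Order the cycles so that their cycle heads are increasing from left to right. Removing the brackets gives a word with $L$ distinct letters from $\{1,\ldots,L\}$, regarded as a permutation; this is $F(s)$. (Example: $s=359724681$ has cycles $[139][25][476][8]$, written canonically as $[52][764][8][913]$, so $F(s)=527648913$.) It is a known fact that $F$ is a bijection of $\mathcal{S}_L$. For $u\in\mathcal{S}_L$, $\tilde u\in\mathcal{S}_L$ is defined by $\tilde u(i)=L+1-u(L+1-i)$ for all $i$ (rotation of the point diagram by $180$ degrees). *)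

(* Defs.v *)
(* Permutations of {1..L} are modelled 0-indexed as {perm 'I_L}:
   the point k : 'I_L stands for k+1. *)
From mathcomp Require Import all_boot all_fingroup.
Set Implicit Arguments. Unset Strict Implicit. Unset Printing Implicit Defensive.

Definition cycle_heads (L : nat) (s : {perm 'I_L}) : seq 'I_L :=
  [seq c <- enum 'I_L | [forall y in porbit s c, (y <= c)%N]].

Definition foata_word (L : nat) (s : {perm 'I_L}) : seq 'I_L :=
  flatten [seq traject (fun x => s x) c #|porbit s c| | c <- cycle_heads s].

Definition foata_fun (L : nat) (s : {perm 'I_L}) (i : 'I_L) : 'I_L :=
  nth i (foata_word s) i.

(* Foata correspondence F : S_L -> S_L.  (The word is always a permutation, a
   known fact; the fallback branch is never used.) *)
Definition foata (L : nat) (s : {perm 'I_L}) : {perm 'I_L} :=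
  match injectiveP (foata_fun s) with
  | ReflectT H => perm H
  | ReflectF _ => 1%g
  end.

Lemma tilde_inj (L : nat) (u : {perm 'I_L}) :
  injective (fun i : 'I_L => rev_ord (u (rev_ord i))).
Proof. move=> i j /= /rev_ord_inj /perm_inj; exact: rev_ord_inj. Qed.

(* tilde u (i) = L+1 - u(L+1-i)  (0-indexed: rev_ord (u (rev_ord i))) *)
Definition tilde (L : nat) (u : {perm 'I_L}) : {perm 'I_L} := perm (@tilde_inj L u).

Definition setA (b L : nat) : {set {perm 'I_L}} :=
  [set s : {perm 'I_L} | [forall x, #|porbit s x| <= b]].

(* B: no j >= 0, j+b < i <= L with t(j+k) > t(i) for all k in 1..b.
   0-indexed: positions j..j+b-1 and i with j+b <= i < L. *)
Definition setB (b L : nat) : {set {perm 'I_L}} :=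
  [set t : {perm 'I_L} | ~~ [exists j : 'I_L, exists i : 'I_L,
      (j + b <= i) && [forall k : 'I_L, (j <= k < j + b) ==> (t i < t k)]]].

(* Main.v *)
Require Import Defs.
From mathcomp Require Import all_boot all_fingroup.
From mathcomp Require Import zify.
Set Implicit Arguments. Unset Strict Implicit. Unset Printing Implicit Defensive.

Fixpoint Pb (m : nat) (bs : seq (seq nat)) : bool :=
  match bs with
  | [::] => true
  | [::] :: _ => false
  | (h :: r) :: bs' => [&& m <= h, all (fun x => x < h) r & Pb h.+1 bs']
  end.

Lemma Pb_head m bs y t : Pb m bs -> flatten bs = y :: t -> m <= y.
Proof.
case: bs => [|[|h r] bs] //= /and3P[mh _ _]; by case=> <-.
Qed.

Lemma split_uniq h r r' u u' : all (fun x => x < h) r -> all (fun x => x < h) r' ->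
  (forall y t, u = y :: t -> h < y) -> (forall y t, u' = y :: t -> h < y) ->
  r ++ u = r' ++ u' -> r = r'.
Proof.
elim: r r' => [|x r IH] [|x' r'] //=.
- move=> _ /andP[hx' _] Hu _ E; have := Hu _ _ E; lia.
- move=> /andP[hx _] _ _ Hu' E; have := Hu' _ _ (esym E); lia.
- move=> /andP[_ hr] /andP[_ hr'] Hu Hu' [-> E]; congr (_ :: _); exact: IH E.
Qed.

Lemma Pb_uniq bs : forall m m' bs', Pb m bs -> Pb m' bs' -> flatten bs = flatten bs' -> bs = bs'.
Proof.
elim: bs => [|[|h r] bs IH] m m' [|[|h' r'] bs'] //=.
move=> /and3P[_ hr Pbs] /and3P[_ hr' Pbs'] [eh E]; subst h'.
have er : r = r'.
  apply: (split_uniq hr hr' _ _ E) => y t Et.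
  + exact: (Pb_head Pbs Et).
  + exact: (Pb_head Pbs' Et).
subst r'; have E2 := congr1 (drop (size r)) E; rewrite !drop_size_cat // in E2.
by rewrite (IH _ _ _ Pbs Pbs' E2).
Qed.

Lemma blk_le c r x : all (fun y => y < c) r -> x < size (c :: r) -> nth 0 (c :: r) x <= c.
Proof.
move=> hr hx; have := mem_nth 0 hx; rewrite inE => /orP[/eqP -> //|].
by move/(allP hr) => /ltnW.
Qed.

Lemma Pb_G b bs : forall m p, Pb m bs -> all (fun bl => size bl <= b) bs ->
  p < size (flatten bs) ->
  exists h, [/\ h <= p, p < h + b, m <= nth 0 (flatten bs) h &
    forall x, x < h -> nth 0 (flatten bs) x < nth 0 (flatten bs) h].
Proof.
elim: bs => [|[|c r] bs IH] m p //= /and3P[mc hr Pbs] /andP[sz szs] hp.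
have -> : c :: r ++ flatten bs = (c :: r) ++ flatten bs by [].
case: (ltnP p (size (c :: r))) => hpr.
  by exists 0; split => //=; move: sz hpr => /= sz hpr; lia.
have hp' : p - size (c :: r) < size (flatten bs).
  move: hp hpr => /=; rewrite size_cat; lia.
have [h' [h1 h2 h3 h4]] := IH _ _ Pbs szs hp'.
have eh : nth 0 ((c :: r) ++ flatten bs) (size (c :: r) + h') = nth 0 (flatten bs) h'.
  by rewrite nth_cat ltnNge leq_addr /= addKn.
exists (size (c :: r) + h'); rewrite eh.
split => //.
- lia.
- move: hpr h2 => /=; lia.
- by apply: leq_trans h3; apply: ltnW; apply: leq_trans mc _.
move=> x hx; rewrite nth_cat; case: ifP => hxs.
  by apply: leq_trans h3; rewrite ltnS; apply: blk_le.
have := h4 (x - size (c :: r)); rewrite /=; apply; move: hx hxs => /=; lia.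
Qed.

Lemma nth_cat_r (s1 s2 : seq nat) i : nth 0 (s1 ++ s2) (size s1 + i) = nth 0 s2 i.
Proof. by rewrite nth_cat ltnNge leq_addr /= addKn. Qed.

Lemma Pb_E b bs : forall m, Pb m bs -> has (fun bl => b < size bl) bs ->
  exists q, q + b < size (flatten bs) /\
    forall k, 1 <= k <= b -> nth 0 (flatten bs) (q + k) < nth 0 (flatten bs) q.
Proof.
elim: bs => [|[|c r] bs IH] m //= /and3P[mc hr Pbs] /orP[sz|hs].
  exists 0; split; first by rewrite size_cat /=; lia.
  move=> k hk; rewrite add0n /=; case: k hk => [|k] // /andP[_ hk].
  rewrite /= nth_cat ifT; last by move: sz => /=; lia.
  by apply: (allP hr); apply: mem_nth; move: sz => /=; lia.
have [q [hq1 hq2]] := IH _ Pbs hs.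
have -> : c :: r ++ flatten bs = (c :: r) ++ flatten bs by [].
exists (size (c :: r) + q); split; first by rewrite size_cat /=; move: hq1; lia.
move=> k hk; rewrite -addnA !nth_cat_r; exact: hq2.
Qed.

Section Perm.
Variable L : nat.
Implicit Types s : {perm 'I_L}.

Definition blk s (c : 'I_L) : seq 'I_L := traject s c #|porbit s c|.
Definition blocksO s := [seq blk s c | c <- cycle_heads s].
Definition blocksN s := [seq map val (blk s c) | c <- cycle_heads s].

Lemma foata_wordE s : foata_word s = flatten (blocksO s).
Proof. by []. Qed.

Lemma map_val_word s : map val (foata_word s) = flatten (blocksN s).
Proof.
rewrite foata_wordE /blocksO /blocksN; elim: (cycle_heads s) => //= c l IH.
by rewrite map_cat IH.
Qed.

Lemma headP s c : (c \in cycle_heads s) = [forall y in porbit s c, (y <= c)%N].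
Proof. by rewrite /cycle_heads mem_filter mem_enum andbT. Qed.

Lemma blkE s c : exists n, blk s c = c :: traject s (s c) n /\ #|porbit s c| = n.+1.
Proof.
rewrite /blk; have := card_porbit_neq0 s c.
case: #|porbit s c| => // n _; by exists n.
Qed.

Lemma blk_porbit s c x : (x \in blk s c) = (x \in porbit s c).
Proof. by rewrite /blk porbit_traject. Qed.

Lemma blk_tail s c : c \in cycle_heads s ->
  exists r, blk s c = c :: r /\ all (fun x => (val x < val c)%N) r.
Proof.
move=> hc; have [n [E _]] := blkE s c; exists (traject s (s c) n); split=> //.
apply/allP => x hx.
have U : uniq (blk s c) by exact: uniq_traject_porbit.
rewrite E /= in U; case/andP: U => U _.
have xc : x != c by apply/eqP => Exc; rewrite Exc in hx; rewrite hx in U.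
have : x \in porbit s c by rewrite -blk_porbit E inE hx orbT.
rewrite headP in hc; move=> hx2.
have := forallP hc x; rewrite hx2 /= leq_eqVlt.
by case/orP => // /eqP/val_inj E2; rewrite E2 eqxx in xc.
Qed.

Lemma heads_sorted s : sorted (relpre val ltn) (cycle_heads s).
Proof.
apply: sorted_filter; first by move=> a b c /= ; apply: ltn_trans.
by rewrite -sorted_map val_enum_ord iota_ltn_sorted.
Qed.

Lemma Pb_gen s cs : forall m, sorted (relpre val ltn) cs -> all (fun c : 'I_L => m <= c) cs ->
  {subset cs <= cycle_heads s} -> Pb m [seq map val (blk s c) | c <- cs].
Proof.
elim: cs => [|c cs IH] m //= hs /andP[mc hm] hsub.
have [r [E hr]] := blk_tail (hsub c (mem_head _ _)).
rewrite E /= mc /= all_map.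
apply/andP; split.
  by apply/allP => x hx /=; exact: (allP hr x hx).
apply: IH.
- exact: path_sorted hs.
- have := order_path_min _ hs; apply => //; move=> a b d /=; exact: ltn_trans.
- by move=> x hx; apply: hsub; rewrite inE hx orbT.
Qed.

Lemma Pb_blocks s : Pb 0 (blocksN s).
Proof.
apply: Pb_gen; first exact: heads_sorted.
  by apply/allP.
by [].
Qed.


Lemma head_exists s x : exists2 c, c \in cycle_heads s & x \in porbit s c.
Proof.
case: (@arg_maxnP _ x (mem (porbit s x)) val (porbit_id s x)) => c hc hmax.
have E : porbit s c = porbit s x by apply/eqP; rewrite eq_porbit_mem.
exists c; last by rewrite porbit_sym.
rewrite headP; apply/forallP => y; apply/implyP; rewrite E; exact: hmax.
Qed.

Lemma heads_disj s c c' y : c \in cycle_heads s -> c' \in cycle_heads s ->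
  y \in porbit s c -> y \in porbit s c' -> c = c'.
Proof.
move=> hc hc' hy hy'.
have E1 : porbit s y = porbit s c by apply/eqP; rewrite eq_porbit_mem.
have E2 : porbit s y = porbit s c' by apply/eqP; rewrite eq_porbit_mem.
have h1 : c \in porbit s c' by rewrite -E2 E1 porbit_id.
have h2 : c' \in porbit s c by rewrite -E1 E2 porbit_id.
rewrite headP in hc; rewrite headP in hc'.
have := forallP hc c'; rewrite h2 /= => l1.
have := forallP hc' c; rewrite h1 /= => l2.
by apply: val_inj; apply/eqP; rewrite eqn_leq l1 l2.
Qed.

Lemma word_uniq s : uniq (foata_word s).
Proof.
rewrite foata_wordE /blocksO.
have : uniq (cycle_heads s) by rewrite filter_uniq ?enum_uniq.
have : {subset cycle_heads s <= cycle_heads s} by [].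
elim: {-2}(cycle_heads s) => //= c cs IH hsub /andP[ncs ucs].
have u2 : uniq (flatten [seq blk s i | i <- cs]).
  by apply: IH => // z hz; apply: hsub; rewrite inE hz orbT.
rewrite cat_uniq u2 andbT.
rewrite /blk uniq_traject_porbit /=.
apply/hasP => -[y /flatten_mapP [c' hc' hy] hyc].
rewrite -/(blk s c') blk_porbit in hy; rewrite /= -/(blk s c) blk_porbit in hyc.
have hc'2 : c' \in c :: cs by rewrite inE hc' orbT.
have E := heads_disj (hsub _ (mem_head _ _)) (hsub c' hc'2) hyc hy.
by rewrite E hc' in ncs.
Qed.

Lemma word_mem s x : x \in foata_word s.
Proof.
have [c hc hx] := head_exists s x.
rewrite foata_wordE /blocksO; apply/flatten_mapP; exists c => //.
by rewrite blk_porbit.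
Qed.

Lemma word_size s : size (foata_word s) = L.
Proof.
rewrite -[X in _ = X](size_enum_ord L); apply: perm_size; apply: uniq_perm.
- exact: word_uniq.
- exact: enum_uniq.
- by move=> x; rewrite word_mem mem_enum.
Qed.

Lemma foata_fun_inj s : injective (foata_fun s).
Proof.
move=> i j; rewrite /foata_fun => E.
have hi : i < size (foata_word s) by rewrite word_size.
have hj : j < size (foata_word s) by rewrite word_size.
rewrite (set_nth_default j i hi) in E.
apply: val_inj; apply/eqP; by rewrite -(nth_uniq j hi hj (word_uniq s)) E.
Qed.

Lemma foataE s i : foata s i = foata_fun s i.
Proof.
rewrite /foata; case: injectiveP => [H|H]; first by rewrite permE.
by case: H; exact: foata_fun_inj.
Qed.

Lemma foata_val s (i : 'I_L) : val (foata s i) = nth 0 (flatten (blocksN s)) i.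
Proof.
rewrite foataE /foata_fun -map_val_word (nth_map i) // word_size //.
Qed.

Lemma blk_next s c x : x \in blk s c -> s x = next (blk s c) x.
Proof.
move=> hx; apply/eqP.
have C : path.cycle (frel s) (blk s c).
  have [n [E hn]] := blkE s c.
  have ic : iter n.+1 s c = c by rewrite -hn iter_porbit.
  have R : rcons (traject s (s c) n) c = traject s (s c) n.+1.
    by rewrite trajectSr -iterSr ic.
  rewrite E /= R; exact: fpath_traject.
exact: (next_cycle C hx).
Qed.

Lemma blocksN_size s : size (flatten (blocksN s)) = L.
Proof. by rewrite -map_val_word size_map word_size. Qed.

Lemma foata_inj : injective (@foata L).
Proof.
move=> s s' E.
have EN : flatten (blocksN s) = flatten (blocksN s').
  apply: (@eq_from_nth _ 0); first by rewrite !blocksN_size.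
  move=> i; rewrite blocksN_size => hi.
  have := foata_val s (Ordinal hi); rewrite E foata_val /= => ->.
  by [].
have EB : blocksN s = blocksN s' := Pb_uniq (Pb_blocks s) (Pb_blocks s') EN.
have EO : blocksO s = blocksO s'.
  apply: (inj_map (inj_map val_inj)).
  by rewrite /blocksO /blocksN -!map_comp in EB *.
apply/permP => x.
have := word_mem s x; rewrite foata_wordE => /flatten_mapP [c hc hx].
rewrite (blk_next hx).
have : blk s c \in blocksO s' by rewrite -EO; apply: map_f.
case/mapP => c' _ Ec; rewrite Ec -(blk_next (s := s')) // -Ec.
exact: hx.
Qed.

Definition Fw s p := nth 0 (flatten (blocksN s)) p.

Lemma Fw_bound s p : p < L -> Fw s p < L.
Proof. move=> hp; have := foata_val s (Ordinal hp); rewrite /Fw /= => <-; exact: ltn_ord. Qed.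

Lemma tildeF s (k : 'I_L) : val (tilde (foata s) k) = L - (Fw s (L - k.+1)).+1.
Proof. by rewrite /tilde permE /= foata_val. Qed.

Lemma size_blk s c : size (map val (blk s c)) = #|porbit s c|.
Proof. by rewrite size_map size_traject. Qed.

Variable b : nat.

Lemma A_blocks s : s \in setA b L -> all (fun bl => size bl <= b) (blocksN s).
Proof.
rewrite inE => /forallP H; apply/allP => bl /mapP [c _ ->]; by rewrite size_blk.
Qed.

Lemma notA_blocks s : s \notin setA b L -> has (fun bl => b < size bl) (blocksN s).
Proof.
rewrite inE negb_forall => /existsP [x hx].
have [c hc hxc] := head_exists s x.
have Ec : porbit s x = porbit s c by apply/eqP; rewrite eq_porbit_mem.
apply/hasP; exists (map val (blk s c)); first by apply: map_f.
by rewrite size_blk -Ec ltnNge.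
Qed.

Lemma dir1 s : s \in setA b L -> tilde (foata s) \in setB b L.
Proof.
move=> hA; rewrite inE; apply/negP => /existsP [j /existsP [i /andP [hji /forallP hk]]].
have hp : L - j.+1 < size (flatten (blocksN s)) by rewrite blocksN_size; move: (ltn_ord j); lia.
have [h [h1 h2 h3 h4]] := Pb_G (Pb_blocks s) (A_blocks hA) hp.
have hL : L - h.+1 < L by move: (ltn_ord j) h1; lia.
have := hk (Ordinal hL); rewrite /= !tildeF /=.
have -> : L - (L - h.+1).+1 = h by move: (ltn_ord j) h1; lia.
have hi := ltn_ord i; have hj := ltn_ord j.
have hhL : h < L by move: h1; lia.
have b2 := Fw_bound s hhL.
have b3 : Fw s (L - i.+1) < L by apply: Fw_bound; lia.
have lt1 : Fw s (L - i.+1) < Fw s h by apply: h4; move: hji h2; lia.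
move=> /implyP H.
have H2 : (j <= L - h.+1) && (L - h.+1 < j + b) by apply/andP; split; lia.
move: (H H2); lia.
Qed.

Lemma dir2 s : s \notin setA b L -> tilde (foata s) \notin setB b L.
Proof.
move=> hA; rewrite inE negbK.
have [q [hq1 hq2]] := Pb_E (Pb_blocks s) (notA_blocks hA).
rewrite blocksN_size in hq1.
have hi : L - q.+1 < L by lia.
have hj : L - q.+1 - b < L by lia.
apply/existsP; exists (Ordinal hj); apply/existsP; exists (Ordinal hi).
rewrite /=; apply/andP; split; first lia.
apply/forallP => k; apply/implyP => /andP [k1 k2].
rewrite !tildeF /=.
have -> : L - (L - q.+1).+1 = q by lia.
have hk := ltn_ord k.
have E : L - k.+1 = q + (L - k.+1 - q) by lia.
have lt1 := hq2 (L - k.+1 - q) ltac:(apply/andP; split; lia).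
rewrite -E in lt1.
have hqL : q < L by lia.
have b1 := Fw_bound s hqL.
rewrite /Fw in b1 *; lia.
Qed.

End Perm.

Lemma tildeK (L : nat) (u : {perm 'I_L}) : tilde (tilde u) = u.
Proof. by apply/permP => i; rewrite /tilde !permE /= !rev_ordK. Qed.

Theorem mainTheorem2 (b L : nat) (hb : 1 <= b) (hL : 1 <= L) :
  [/\ {in setA b L, forall s, tilde (foata s) \in setB b L},
      {in setA b L &, injective (fun s => tilde (foata s))},
      (forall t, t \in setB b L -> exists2 s, s \in setA b L & tilde (foata s) = t)
    & #|setA b L| = #|setB b L|].
Proof.
have finj : injective (fun s : {perm 'I_L} => tilde (foata s)).
  by move=> s s' /= E; apply: foata_inj; rewrite -(tildeK (foata s)) E tildeK.
have surj : forall t, t \in setB b L -> exists2 s, s \in setA b L & tilde (foata s) = t.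
  move=> t ht; have /codomP [s Es] := inj_card_onto finj (leqnn _) t.
  exists s => //; case: (boolP (s \in setA b L)) => // /(@dir2 L b).
  by rewrite -Es ht.
split => //.
- by move=> s hs; exact: dir1.
- by move=> s s' _ _; apply: finj.
rewrite -(card_imset (mem (setA b L)) finj); apply: eq_card => t.
apply/imsetP/idP => [[s hs ->]|ht]; first exact: dir1.
by have [s hs Et] := surj t ht; exists s.
Qed.
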